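(* Let $\mathcal{X}\subset\mathbb{R}^n$ be open, connected and bounded, let $1\le m<n$, and let $\{(x_i,u_i,\dot{x}_i)\}_{i=1}^{N}\subset \mathcal{X}\times\mathbb{R}^m\times\mathbb{R}^n$ be a training dataset. Let $X_c=\{x_1,\ldots,x_{N_c}\}\subset\mathcal{X}$ be a finite constraint set containing all the training states $x_i$, $i=1,\ldots,N$. Let $K^f$ and $K^B$ be $\mathcal{C}^2$ operator-valued positive definite kernels on $\mathcal{X}\times\mathcal{X}$ with associated $\mathbb{R}^n$-valued RKHSs $\mathcal{H}_K^f$ and $\mathcal{H}_K^B$, and define the finite-dimensional subspaces $$\mathcal{V}_f=\Big\{\sum_{i=1}^{N_c}K^f_{x_i}a_i+\sum_{i=1}^{N_c}\sum_{p=1}^n\partial_pK^f_{x_i}a'_{ip}\ :\ a_i,a'_{ip}\in\mathbb{R}^n\Big\}\subset\mathcal{H}_K^f,$$ $$\mathcal{V}_B=\Big\{\sum_{i=1}^{N_c}K^B_{x_i}c_i+\sum_{i=1}^{N_c}\sum_{p=1}^n\partial_pK^B_{x_i}c'_{ip}\ :\ c_i,c'_{ip}\in\mathbb{R}^n\Big\}\subset\mathcal{H}_K^B.$$ Suppose the kernel $K^B$ is chosen such that every $g\in\mathcal{H}_K^B$ satisfies $g^j(x)=0$ for $j=1,\ldots,n-m$ and all $x$. Fix $\lambda>0$, $\mu_f,\mu_b>0$, and a fixed differentiable symmetric-matrix-valued function $W:\mathcal{X}\to\mathbb{S}_n$. Consider the problem $$\min_{\hat f\in\mathcal{H}_K^f,\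 \hat b_j\in\mathcal{H}_K^B,\ j=1,\ldots,m}\ J_d(\hat f,\hat B)\quad\text{s.t.}\quad \mathcal{F}_\lambda(x_i;\hat f,W)\preceq 0\ \ \forall x_i\in X_c,$$ where $\hat B=(\hat b_1,\ldots,\hat b_m)$, $$J_d(\hat f,\hat B)=\sum_{i=1}^N\big\|\hat f(x_i)+\hat B(x_i)u_i-\dot x_i\big\|^2+\mu_f\|\hat f\|^2_{\mathcal{H}_K^f}+\mu_b\sum_{j=1}^m\|\hat b_j\|^2_{\mathcal{H}_K^B},$$ and $$\mathcal{F}_\lambda(x;\hat f,W)=\hat B_\perp^T\Big(-\partial_{\hat f}W(x)+\tfrac{\partial\hat f(x)}{\partial x}W(x)+\big(\tfrac{\partial\hat f(x)}{\partial x}W(x)\big)^T+2\lambda W(x)\Big)\hat B_\perp,\qquad \hat B_\perp=\begin{bmatrix}I_{n-m}\\ O_{m\times(n-m)}\end{bmatrix}.$$ Suppose the feasible set of this LMI constraint is non-empty, and let $f^*$ and $b_j^*$, $j=1,\ldots,m$, be optimizers of this problem. Then $f^*\in\mathcal{V}_f$ and $b_j^*\in\mathcal{V}_B$ for all $j=1,\ldots,m$.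
   Context: For an operator-valued positive definite kernel $K:\mathcal{X}\times\mathcal{X}\to\mathbb{R}^{n\times n}$ (i.e. $K(x,z)^T=K(z,x)$ and $\sum_{i,j}\langle y_i,K(x_i,x_j)y_j\rangle\ge0$ for all finite families), the RKHS $\mathcal{H}_K$ is the completion of the span of the functions $K_xy:=K(\cdot,x)y$ ($x\in\mathcal{X}$, $y\in\mathbb{R}^n$) under the inner product $\langle K_xy,K_zw\rangle_{\mathcal{H}_K}=\langle y,K(x,z)w\rangle$; it satisfies $\langle f(x),y\rangle=\langle f,K_xy\rangle_{\mathcal{H}_K}$. For $K\in\mathcal{C}^2$, $\partial_jK_xy$ denotes the function $z\mapsto \frac{\partial}{\partial s^j}K(r,s)\big|_{r=z,s=x}\,y$ (elementwise derivative). For a vector field $g$ and matrix function $W$, $\partial_gW(x)$ denotes the matrix whose $(p,q)$ entry is $\langle \nabla w_{pq}(x),g(x)\rangle$, the derivative of $w_{pq}$ along $g$. $\mathbb{S}_n$ is the set of symmetric $n\times n$ real matrices; $\preceq$ is the Loewner order. The matrix $\hat B_\perp$ satisfies $\hat B(x)^T\hat B_\perp=0$ because of the sparsity structure of $\mathcal{H}_K^B$. *)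

(* Defs.v *)
From mathcomp Require Import all_boot all_algebra all_classical all_reals all_analysis.
Import GRing.Theory Num.Theory numFieldNormedType.Exports.
Set Implicit Arguments. Unset Strict Implicit. Unset Printing Implicit Defensive.
Local Open Scope classical_set_scope.
Local Open Scope ring_scope.

Section Defs.
Variable R : realType.

Definition vfun (n : nat) := 'rV[R]_n -> 'cV[R]_n.

Definition ebasis (n : nat) (i : 'I_n) : 'rV[R]_n := delta_mx 0 i.

Definition pdir2 (n : nat) (i : 'I_(n + n)) : 'rV[R]_n * 'rV[R]_n :=
  match fintype.split i with inl a => (ebasis a, 0) | inr b => (0, ebasis b) end.

Definition C2_on (V : normedModType R) (k : nat) (U : set V) (dirs : 'I_k -> V)
  (g : V -> R) : Prop :=
  (forall x, U x -> {for x, continuous g}) /\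
  forall i : 'I_k,
    (forall x, U x -> derivable g x (dirs i)) /\
    (forall x, U x -> {for x, continuous ('D_(dirs i) g)}) /\
    forall j : 'I_k,
      (forall x, U x -> derivable ('D_(dirs i) g) x (dirs j)) /\
      (forall x, U x -> {for x, continuous ('D_(dirs j) ('D_(dirs i) g))}).

Definition kernel_C2 (n : nat) (X : set 'rV[R]_n) (K : 'rV[R]_n -> 'rV[R]_n -> 'M[R]_n) :=
  forall a b : 'I_n, C2_on (X `*` X) (@pdir2 n) (fun p => K p.1 p.2 a b).

Definition pd_kernel (n : nat) (X : set 'rV[R]_n) (K : 'rV[R]_n -> 'rV[R]_n -> 'M[R]_n) :=
  (forall x z, X x -> X z -> (K x z)^T = K z x) /\
  forall (k : nat) (xs : 'I_k -> 'rV[R]_n) (ys : 'I_k -> 'cV[R]_n),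
    (forall i, X (xs i)) ->
    0 <= \sum_(i < k) \sum_(j < k) ((ys i)^T *m K (xs i) (xs j) *m ys j) 0 0.

Definition Ksec (n : nat) (K : 'rV[R]_n -> 'rV[R]_n -> 'M[R]_n) (x : 'rV[R]_n)
  (y : 'cV[R]_n) : vfun n := fun z => K z x *m y.

Definition dKsec (n : nat) (K : 'rV[R]_n -> 'rV[R]_n -> 'M[R]_n) (p : 'I_n)
  (x : 'rV[R]_n) (y : 'cV[R]_n) : vfun n :=
  fun z => (\matrix_(a < n, b < n) 'D_(ebasis p) (fun s => K z s a b) x) *m y.

(* (H, ip) is the R^n-valued RKHS of the kernel K on X: a real Hilbert space
   of functions on X (functions are identified when they agree on X) that
   contains every section K_x y and has the reproducing property. *)
Definition is_rkhs (n : nat) (X : set 'rV[R]_n) (K : 'rV[R]_n -> 'rV[R]_n -> 'M[R]_n)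
  (H : set (vfun n)) (ip : vfun n -> vfun n -> R) : Prop :=
  H (fun _ => 0) /\
      (forall f g, H f -> H g -> H (fun z => f z + g z)) /\
      (forall (c : R) f, H f -> H (fun z => c *: f z)) /\
      (forall f g, H f -> H g -> ip f g = ip g f) /\
      (forall (c : R) f g h, H f -> H g -> H h ->
          ip (fun z => c *: f z + g z) h = c * ip f h + ip g h) /\
      (forall f, H f -> 0 <= ip f f) /\
      (forall f, H f -> ip f f = 0 -> forall x, X x -> f x = 0) /\
      (forall u : nat -> vfun n, (forall k, H (u k)) ->
         (forall e : R, 0 < e -> exists N, forall i j, (N <= i)%N -> (N <= j)%N ->
             ip (fun z => u i z - u j z) (fun z => u i z - u j z) < e) ->
         exists f, H f /\ forall e : R, 0 < e -> exists N, forall i, (N <= i)%N ->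
             ip (fun z => u i z - f z) (fun z => u i z - f z) < e) /\
      (forall x y, X x -> H (Ksec K x y)) /\
      (forall f x y, H f -> X x -> ((y^T *m f x) 0 0) = ip f (Ksec K x y)).

Definition jac (n : nat) (f : vfun n) (x : 'rV[R]_n) : 'M[R]_n :=
  \matrix_(a < n, p < n) 'D_(ebasis p) (fun z => f z a 0) x.

Definition dirW (n : nat) (W : 'rV[R]_n -> 'M[R]_n) (g : vfun n) (x : 'rV[R]_n) : 'M[R]_n :=
  \matrix_(p < n, q < n) \sum_(r < n) 'D_(ebasis r) (fun z => W z p q) x * g x r 0.

Definition Bperp (n m : nat) : 'M[R]_(n, n - m) :=
  \matrix_(i < n, j < n - m) ((i : nat) == j)%:R.

Definition Flam (n m : nat) (lam : R) (f : vfun n) (W : 'rV[R]_n -> 'M[R]_n)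
  (x : 'rV[R]_n) : 'M[R]_(n - m) :=
  (Bperp n m)^T *m (- dirW W f x + jac f x *m W x + (jac f x *m W x)^T
                    + (2 * lam) *: W x) *m Bperp n m.

Definition psd (k : nat) (M : 'M[R]_k) : Prop :=
  forall v : 'cV[R]_k, 0 <= (v^T *m M *m v) 0 0.
Definition loewner_le (k : nat) (A B : 'M[R]_k) : Prop := psd (B - A).

Definition Bhat (n m : nat) (b : 'I_m -> vfun n) (x : 'rV[R]_n) : 'M[R]_(n, m) :=
  \matrix_(a < n, j < m) b j x a 0.

Definition sqnorm (n : nat) (v : 'cV[R]_n) : R := \sum_(a < n) (v a 0) ^+ 2.

Definition Jd (n m N : nat) (xs : 'I_N -> 'rV[R]_n) (us : 'I_N -> 'cV[R]_m)
  (xds : 'I_N -> 'cV[R]_n) (muf mub : R) (ipf ipb : vfun n -> vfun n -> R)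
  (f : vfun n) (b : 'I_m -> vfun n) : R :=
  \sum_(i < N) sqnorm (f (xs i) + Bhat b (xs i) *m us i - xds i)
  + muf * ipf f f + mub * \sum_(j < m) ipb (b j) (b j).

Definition in_V (n Nc : nat) (X : set 'rV[R]_n) (K : 'rV[R]_n -> 'rV[R]_n -> 'M[R]_n)
  (xc : 'I_Nc -> 'rV[R]_n) (f : vfun n) : Prop :=
  exists (a : 'I_Nc -> 'cV[R]_n) (a' : 'I_Nc -> 'I_n -> 'cV[R]_n),
    forall z, X z ->
      f z = \sum_(i < Nc) Ksec K (xc i) (a i) z
            + \sum_(i < Nc) \sum_(p < n) dKsec K p (xc i) (a' i p) z.

End Defs.

(* Main.v *)
Require Import Defs.
From mathcomp Require Import all_boot all_algebra all_classical all_reals all_analysis.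
From mathcomp Require Import ring lra.
Import order.Order.TTheory GRing.Theory Num.Theory numFieldNormedType.Exports.
Local Open Scope classical_set_scope.
Local Open Scope ring_scope.
Section A.
Variable R : realType.

Lemma line_quot (V : normedModType R) (G : V -> R) (v b : V) (u : R) :
  (fun h : R => h^-1 *: (((fun t : R => G (t *: v + b)) \o shift u) (h *: 1) - G (u *: v + b)))
  = (fun h : R => h^-1 *: ((G \o shift (u *: v + b)) (h *: v) - G (u *: v + b))).
Proof.
apply/funext => h /=. by rewrite scalerDl -addrA [h%:A]mulr1.
Qed.

Lemma line_derivable (V : normedModType R) (G : V -> R) (v b : V) (u : R) :
  derivable G (u *: v + b) v -> derivable (fun t : R => G (t *: v + b)) u 1.
Proof. by rewrite /derivable line_quot. Qed.

Lemma line_derive (V : normedModType R) (G : V -> R) (v b : V) (u : R) :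
  'D_1 (fun t : R => G (t *: v + b)) u = 'D_v G (u *: v + b).
Proof. by rewrite /derive line_quot. Qed.

Lemma mvt0 (F : R -> R) (t : R) :
  (forall u, `|u| <= `|t| -> derivable F u 1) ->
  exists2 c, `|c| <= `|t| & F t - F 0 = 'D_1 F c * t.
Proof.
move=> dF.
have [t0|t0] := leP 0 t.
  have := @MVT_segment R F (fun x => derive F x 1) 0 t t0.
  case.
  - move=> x; rewrite in_itv /= => /andP[x0 xt]; apply: derivableP; apply: dF.
    by rewrite !ger0_norm // ?ltW.
  - apply: derivable_within_continuous => x; rewrite in_itv /= => /andP[x0 xt]; apply: dF.
    by rewrite !ger0_norm.
  move=> c; rewrite in_itv /= => /andP[c0 ct] ->; exists c; last by rewrite subr0.
  by rewrite !ger0_norm.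
have := @MVT_segment R F (fun x => derive F x 1) t 0 (ltW t0).
case.
- move=> x; rewrite in_itv /= => /andP[x0 xt]; apply: derivableP; apply: dF.
  by rewrite !ltr0_norm // lerN2 ltW.
- apply: derivable_within_continuous => x; rewrite in_itv /= => /andP[x0 xt]; apply: dF.
  by rewrite !ler0_norm ?lerN2 // ltW.
move=> c; rewrite in_itv /= => /andP[c0 ct] E; exists c.
  by rewrite !ler0_norm ?lerN2 // ltW.
by apply: (@oppr_inj _); rewrite opprB E sub0r mulrN.
Qed.

Lemma pairE {n} (u : R) (a b c d : 'rV[R]_n) : u *: (a, b) + (c, d) = (u *: a + c, u *: b + d).
Proof. by []. Qed.

Lemma near_line {n} (x e : 'rV[R]_n) (P : set 'rV[R]_n) :
  nbhs x P -> \forall u \near (0:R), P (u *: e + x).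
Proof.
move=> Px.
have c : (fun u : R => u *: e + x) @ (0:R) --> x.
  rewrite -[X in _ --> X](add0r x) -[X in X + x](scale0r e).
  by apply: cvgD; [exact: scalel_continuous | exact: cvg_cst].
exact: c.
Qed.

Lemma near0_delta (P : R -> Prop) :
  (\forall u \near (0:R), P u) -> exists2 d, 0 < d & forall u, `|u| < d -> P u.
Proof.
move/nbhs_ballP => [d d0 H]; exists d => // u hu; apply: H.
by rewrite /ball /= sub0r normrN.
Qed.

Section Kern.
Variables (n : nat) (X : set 'rV[R]_n) (K : 'rV[R]_n -> 'rV[R]_n -> 'M[R]_n).
Hypothesis oX : open X.
Hypothesis KC2 : kernel_C2 X K.

Lemma pdir2_l (p : 'I_n) : pdir2 R (lshift n p) = (ebasis R p, 0).
Proof. by rewrite /pdir2 -[lshift n p]/(unsplit (inl _ p)) unsplitK. Qed.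
Lemma pdir2_r (p : 'I_n) : pdir2 R (rshift n p) = (0, ebasis R p).
Proof. by rewrite /pdir2 -[rshift n p]/(unsplit (inr _ p)) unsplitK. Qed.

Lemma Xline (x : 'rV[R]_n) (p : 'I_n) : X x ->
  exists2 d, 0 < d & forall u, `|u| < d -> X (u *: ebasis R p + x).
Proof. by move=> Xx; apply: near0_delta; apply: near_line; exact: oX. Qed.

Definition Gk (a : 'I_n) : 'rV[R]_n * 'rV[R]_n -> R := fun q => K q.1 q.2 a a.

Lemma Qlim (a p : 'I_n) (x : 'rV[R]_n) : X x ->
  forall eps, 0 < eps -> exists2 d, 0 < d & forall s t, `|s| < d -> `|t| < d ->
   s != 0 -> t != 0 ->
  `| (s * t)^-1 * (Gk a (s *: ebasis R p + x, t *: ebasis R p + x) - Gk a (x, t *: ebasis R p + x)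
        - Gk a (s *: ebasis R p + x, x) + Gk a (x, x))
     - 'D_(pdir2 R (rshift n p)) ('D_(pdir2 R (lshift n p)) (Gk a)) (x, x) | < eps.
Proof.
move=> Xx eps eps0.
set e := ebasis R p.
have [_ /(_ (lshift n p)) [di [_ /(_ (rshift n p)) [dij cij]]]] := KC2 a a.
rewrite pdir2_l pdir2_r in di dij cij *.
have := cij (x, x) (conj Xx Xx).
move/cvgrPdist_lt => /(_ eps eps0) /nbhs_ballP [r r0 Hr].
have [d d0 Hd] : exists2 d, 0 < d & forall u, `|u| < d -> X (u *: e + x) /\ ball x r (u *: e + x).
  apply: near0_delta.
  have h1 := near_line x e X (oX x Xx).
  have h2 := near_line x e (ball x r) (nbhsx_ballx x r r0).
  by near=> u; split; [near: u; exact: h1 | near: u; exact: h2].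
exists d => // s t sd td s0 t0.
pose v1 : 'rV[R]_n * 'rV[R]_n := (e, 0).
pose v2 : 'rV[R]_n * 'rV[R]_n := (0, e).
pose F1 := fun u : R => Gk a (u *: v1 + (x, t *: e + x)).
pose F2 := fun u : R => Gk a (u *: v1 + (x, x)).
have dF1 u : `|u| <= `|s| -> derivable F1 u 1.
  move=> us; apply: line_derivable; apply: di.
  rewrite pairE scaler0 add0r; split; apply Hd; first exact: le_lt_trans us sd.
  exact: td.
have dF2 u : `|u| <= `|s| -> derivable F2 u 1.
  move=> us; apply: line_derivable; apply: di.
  rewrite pairE scaler0 add0r; split; last exact: Xx.
  by apply Hd; exact: le_lt_trans us sd.
have [xi xis Exi] := @mvt0 (F1 - F2) s (fun u us => derivableB (dF1 u us) (dF2 u us)).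
rewrite (deriveB (dF1 _ xis) (dF2 _ xis)) /F1 /F2 !line_derive in Exi.
pose D1 := 'D_v1 (Gk a).
pose F3 := fun w : R => D1 (w *: v2 + (xi *: e + x, x)).
have dF3 w : `|w| <= `|t| -> derivable F3 w 1.
  move=> wt; apply: line_derivable; apply: dij.
  rewrite pairE scaler0 add0r; split; apply Hd; first exact: le_lt_trans xis sd.
  exact: le_lt_trans wt td.
have [eta etat Eeta] := @mvt0 F3 t dF3.
rewrite line_derive in Eeta.
have E1 : xi *: v1 + (x, t *: e + x) = t *: v2 + (xi *: e + x, x).
  by rewrite !pairE ?scaler0 ?scale0r ?add0r ?addr0.
have E2 : xi *: v1 + (x, x) = 0 *: v2 + (xi *: e + x, x).
  by rewrite !pairE ?scaler0 ?scale0r ?add0r ?addr0.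
have E3 : eta *: v2 + (xi *: e + x, x) = (xi *: e + x, eta *: e + x).
  by rewrite !pairE ?scaler0 ?scale0r ?add0r ?addr0.
rewrite E1 E2 -/D1 in Exi.
move: Exi; rewrite -/(F3 t) -/(F3 0) Eeta E3 => Exi.
have -> : Gk a (s *: e + x, t *: e + x) - Gk a (x, t *: e + x) - Gk a (s *: e + x, x) + Gk a (x, x)
   = (F1 s - F2 s) - (F1 0 - F2 0).
  rewrite /F1 /F2 !pairE !scaler0 !scale0r !add0r.
  by rewrite /Gk /=; lra.
rewrite [_ s - _ s]/= Exi.
have -> : (s * t)^-1 * ('D_v2 D1 (xi *: e + x, eta *: e + x) * t * s) = 'D_v2 D1 (xi *: e + x, eta *: e + x).
  by field; apply/andP.
rewrite distrC; apply: Hr; split; apply Hd.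
  exact: le_lt_trans xis sd.
exact: le_lt_trans etat td.
Unshelve. all: by end_near.
Qed.
End Kern.

Set Implicit Arguments. Unset Strict Implicit.
Section IP.
Variables (n : nat) (X : set 'rV[R]_n) (K : 'rV[R]_n -> 'rV[R]_n -> 'M[R]_n).
Variables (H : set (vfun R n)) (ip : vfun R n -> vfun R n -> R).
Hypothesis RK : is_rkhs X K H ip.

Lemma H0 : H (fun _ => 0). Proof. by case: RK. Qed.
Lemma HD f g : H f -> H g -> H (fun z => f z + g z).
Proof. by case: RK => _ [h _]; apply: h. Qed.
Lemma HZ c f : H f -> H (fun z => c *: f z).
Proof. by case: RK => _ [_ [h _]]; apply: h. Qed.
Lemma ipC f g : H f -> H g -> ip f g = ip g f.
Proof. by case: RK => _ [_ [_ [h _]]]; apply: h. Qed.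
Lemma ipL c f g h : H f -> H g -> H h -> ip (fun z => c *: f z + g z) h = c * ip f h + ip g h.
Proof. by case: RK => _ [_ [_ [_ [hh _]]]]; apply: hh. Qed.
Lemma ip_ge0 f : H f -> 0 <= ip f f.
Proof. by case: RK => _ [_ [_ [_ [_ [hh _]]]]]; apply: hh. Qed.
Lemma ip_eq0 f : H f -> ip f f = 0 -> forall x, X x -> f x = 0.
Proof. by case: RK => _ [_ [_ [_ [_ [_ [hh _]]]]]]; apply: hh. Qed.
Lemma Hcomplete (u : nat -> vfun R n) : (forall k, H (u k)) ->
         (forall e : R, 0 < e -> exists N, forall i j, (N <= i)%N -> (N <= j)%N ->
             ip (fun z => u i z - u j z) (fun z => u i z - u j z) < e) ->
         exists f, H f /\ forall e : R, 0 < e -> exists N, forall i, (N <= i)%N ->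
             ip (fun z => u i z - f z) (fun z => u i z - f z) < e.
Proof. by case: RK => _ [_ [_ [_ [_ [_ [_ [hh _]]]]]]]; apply: hh. Qed.
Lemma HK x y : X x -> H (Ksec K x y).
Proof. by case: RK => _ [_ [_ [_ [_ [_ [_ [_ [hh _]]]]]]]]; apply: hh. Qed.
Lemma repro f x y : H f -> X x -> ((y^T *m f x) 0 0) = ip f (Ksec K x y).
Proof. by case: RK => _ [_ [_ [_ [_ [_ [_ [_ [_ hh]]]]]]]]; apply: hh. Qed.

Lemma HL c f g : H f -> H g -> H (fun z => c *: f z + g z).
Proof. by move=> hf hg; apply: HD => //; apply: HZ. Qed.
Lemma HB f g : H f -> H g -> H (fun z => f z - g z).
Proof.
move=> hf hg; have := HL (-1) hg hf.
by have -> : (fun z => -1 *: g z + f z) = (fun z => f z - g z) by apply/funext => z; rewrite scaleN1r addrC.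
Qed.

Lemma ipLr c f g h : H f -> H g -> H h -> ip h (fun z => c *: f z + g z) = c * ip h f + ip h g.
Proof. by move=> hf hg hh; rewrite ipC ?ipL ?(ipC hf) ?(ipC hg) //; apply: HL. Qed.

Lemma ip0l h : H h -> ip (fun _ => 0) h = 0.
Proof.
move=> hh; have := ipL 1 H0 H0 hh.
have -> : (fun z : 'rV[R]_n => 1 *: (0 : 'cV[R]_n) + 0) = (fun _ : 'rV[R]_n => (0 : 'cV[R]_n)) by apply/funext => z; rewrite scaler0 addr0.
rewrite mul1r => E; lra.
Qed.
Lemma ip0r h : H h -> ip h (fun _ => 0) = 0.
Proof. by move=> hh; rewrite ipC ?ip0l //; exact: H0. Qed.

Lemma ipDl f g h : H f -> H g -> H h -> ip (fun z => f z + g z) h = ip f h + ip g h.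
Proof.
move=> hf hg hh; rewrite -[ip f h]mul1r -ipL //.
by congr ip; apply/funext => z; rewrite scale1r.
Qed.
Lemma ipBl f g h : H f -> H g -> H h -> ip (fun z => f z - g z) h = ip f h - ip g h.
Proof.
move=> hf hg hh.
have -> : (fun z => f z - g z) = (fun z => -1 *: g z + f z) by apply/funext => z; rewrite scaleN1r addrC.
by rewrite ipL // mulN1r addrC.
Qed.
Lemma ipZl c f h : H f -> H h -> ip (fun z => c *: f z) h = c * ip f h.
Proof.
move=> hf hh.
have -> : (fun z => c *: f z) = (fun z => c *: f z + (fun _ => 0) z) by apply/funext => z; rewrite addr0.
by rewrite ipL ?ip0l ?addr0 //; exact: H0.
Qed.
Lemma ipDr f g h : H f -> H g -> H h -> ip h (fun z => f z + g z) = ip h f + ip h g.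
Proof. by move=> hf hg hh; rewrite ipC ?ipDl ?(ipC hf) ?(ipC hg) //; apply: HD. Qed.
Lemma ipBr f g h : H f -> H g -> H h -> ip h (fun z => f z - g z) = ip h f - ip h g.
Proof. by move=> hf hg hh; rewrite ipC ?ipBl ?(ipC hf) ?(ipC hg) //; apply: HB. Qed.
Lemma ipZr c f h : H f -> H h -> ip h (fun z => c *: f z) = c * ip h f.
Proof. by move=> hf hh; rewrite ipC ?ipZl ?(ipC hf) //; apply: HZ. Qed.

Lemma ipquad l u v : H u -> H v ->
  ip (fun z => l *: u z + v z) (fun z => l *: u z + v z) = l ^+ 2 * ip u u + 2 * l * ip u v + ip v v.
Proof.
move=> hu hv; have hw := HL l hu hv.
rewrite ipL // !ipLr // (ipC hv hu); ring.
Qed.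

Lemma CS u v : H u -> H v -> ip u v ^+ 2 <= ip u u * ip v v.
Proof.
move=> hu hv.
have Q l : 0 <= l ^+ 2 * ip u u + 2 * l * ip u v + ip v v by rewrite -ipquad //; apply: ip_ge0; apply: HL.
have uu0 := ip_ge0 hu; have vv0 := ip_ge0 hv.
have [uu|uu] := eqVneq (ip u u) 0.
  rewrite uu mul0r.
  have [uv|uv] := eqVneq (ip u v) 0; first by rewrite uv expr0n.
  have := Q (- (ip v v + 1) / (2 * ip u v)); rewrite uu mulr0 add0r.
  have -> : 2 * (- (ip v v + 1) / (2 * ip u v)) * ip u v = - (ip v v + 1) by field; rewrite uv.
  lra.
have uup : 0 < ip u u by rewrite lt_neqAle eq_sym uu.
have := Q (- ip u v / ip u u).
have -> : (- ip u v / ip u u) ^+ 2 * ip u u + 2 * (- ip u v / ip u u) * ip u v + ip v v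
  = (ip u u * ip v v - ip u v ^+ 2) / ip u u by field.
by rewrite pmulr_lge0 ?invr_gt0 // subr_ge0.
Qed.

Definition nd (f g : vfun R n) := ip (fun z => f z - g z) (fun z => f z - g z).

Lemma nd_ge0 f g : H f -> H g -> 0 <= nd f g.
Proof. by move=> hf hg; apply: ip_ge0; apply: HB. Qed.

Lemma nd_tri f g h : H f -> H g -> H h -> nd f h <= 2 * nd f g + 2 * nd g h.
Proof.
move=> hf hg hh.
have hA := HB hf hg; have hB := HB hg hh.
have q1 := ipquad 1 hA hB; have q2 := ipquad (-1) hA hB.
have -> : nd f h = ip (fun z => 1 *: (f z - g z) + (g z - h z)) (fun z => 1 *: (f z - g z) + (g z - h z)).
  by rewrite /nd; congr ip; apply/funext => z; rewrite scale1r addrA subrK.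
rewrite q1 /nd.
have := ip_ge0 (HL (-1) hA hB); rewrite q2.
lra.
Qed.

Lemma CS_small u v (eps : R) : H u -> H v -> 0 < eps ->
  ip v v < eps ^+ 2 / (ip u u + 1) -> `|ip u v| < eps.
Proof.
move=> hu hv e0 hvv.
have uu0 := ip_ge0 hu; have vv0 := ip_ge0 hv.
have := CS hu hv.
have h1 : ip u u * ip v v <= ip u u * (eps ^+ 2 / (ip u u + 1)) by apply: ler_wpM2l => //; exact: ltW.
have h2 : ip u u * (eps ^+ 2 / (ip u u + 1)) < eps ^+ 2.
  rewrite mulrA ltr_pdivrMr; last by lra.
  have : 0 < eps ^+ 2 by apply: exprn_gt0.
  nra.
move=> h3.
have h4 : ip u v ^+ 2 < eps ^+ 2 by lra.
by rewrite ltr_norml; apply/andP; split; nra.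
Qed.


Definition vnth (vs : seq (vfun R n)) i := nth (fun _ => 0) vs i.
Definition inSpan (vs : seq (vfun R n)) (g : vfun R n) :=
  exists c : nat -> R, g = fun z => \sum_(i < size vs) c i *: vnth vs i z.

Lemma nth_In' vs i : (i < size vs)%N -> List.In (vnth vs i) vs.
Proof.
rewrite /vnth; elim: vs i => [|v vs IH] [|i] //=; first by left.
by move=> hi; right; apply: IH.
Qed.

Lemma inSpan_S vs (S : vfun R n -> Prop) g : S (fun _ => 0) ->
  (forall c g1 g2, S g1 -> S g2 -> S (fun z => c *: g1 z + g2 z)) ->
  (forall v, List.In v vs -> S v) -> inSpan vs g -> S g.
Proof.
move=> S0 SL Sv [c ->].
suff: forall k, (k <= size vs)%N -> S (fun z => \sum_(i < k) c i *: vnth vs i z).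
  by apply.
elim=> [|k IH] hk.
  have -> : (fun z => \sum_(i < 0) c i *: vnth vs i z) = (fun _ => 0).
    by apply/funext => z; rewrite big_ord0.
  exact: S0.
have -> : (fun z => \sum_(i < k.+1) c i *: vnth vs i z)
   = (fun z => c k *: vnth vs k z + (fun z => \sum_(i < k) c i *: vnth vs i z) z).
  by apply/funext => z; rewrite big_ord_recr /= addrC.
apply: SL; first by apply: Sv; apply: nth_In'.
by apply: IH; apply: ltnW.
Qed.

Lemma inSpan_cons v vs g : inSpan vs g -> inSpan (v :: vs) g.
Proof.
move=> [c ->]; exists (fun i => if i is j.+1 then c j else 0).
apply/funext => z; rewrite /= big_ord_recl /= scale0r add0r.
by apply: eq_bigr => i _.
Qed.

Lemma inSpan_nth0 v vs : inSpan (v :: vs) v.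
Proof.
exists (fun i => if i is 0 then 1 else 0).
apply/funext => z; rewrite /= big_ord_recl /= scale1r big1 ?addr0 //.
by move=> i _; rewrite scale0r.
Qed.

Lemma inSpan_lin vs c g1 g2 : inSpan vs g1 -> inSpan vs g2 ->
  inSpan vs (fun z => c *: g1 z + g2 z).
Proof.
move=> [c1 ->] [c2 ->]; exists (fun i => c * c1 i + c2 i).
apply/funext => z; rewrite scaler_sumr -big_split; apply: eq_bigr => i _.
by rewrite scalerDl scalerA.
Qed.

Lemma inSpan0 vs : inSpan vs (fun _ => 0).
Proof.
exists (fun _ => 0); apply/funext => z; rewrite big1 // => i _; exact: scale0r.
Qed.

Lemma span_H vs g : (forall v, List.In v vs -> H v) -> inSpan vs g -> H g.
Proof. move=> Hv; apply: inSpan_S => //; [exact: H0 | move=> c g1 g2; exact: HL]. Qed.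

Lemma span_orth vs r g : H r -> (forall v, List.In v vs -> H v) ->
  (forall v, List.In v vs -> ip r v = 0) -> inSpan vs g -> ip r g = 0.
Proof.
move=> hr Hv Ov sg.
suff [] : H g /\ ip r g = 0 by [].
apply: (@inSpan_S vs (fun g => H g /\ ip r g = 0)) => //.
- by split; [exact: H0 | exact: ip0r].
- move=> c g1 g2 [h1 e1] [h2 e2]; split; first exact: HL.
  by rewrite ipLr // e1 e2 mulr0 addr0.
- by move=> v iv; split; [exact: Hv | exact: Ov].
Qed.

Lemma proj vs : (forall v, List.In v vs -> H v) -> forall f, H f ->
  exists fV, H fV /\ inSpan vs fV /\
    forall v, List.In v vs -> ip (fun z => f z - fV z) v = 0.
Proof.
elim: vs => [|v vs IH] Hvs f hf.
  exists (fun _ => 0); split; first exact: H0.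
  by split; [exact: inSpan0 | move=> v []].
have Hvs' : forall v0, List.In v0 vs -> H v0 by move=> v0 i; apply: Hvs; right.
have hv : H v by apply: Hvs; left.
have [fV' [hfV' [sfV' ofV']]] := IH Hvs' f hf.
have [vV' [hvV' [svV' ovV']]] := IH Hvs' v hv.
pose w := fun z => v z - vV' z.
pose r := fun z => f z - fV' z.
have hw : H w by apply: HB.
have hr : H r by apply: HB.
have vE : v = fun z => 1 *: w z + vV' z by apply/funext => z; rewrite scale1r /w subrK.
have sw : inSpan (v :: vs) w.
  have -> : w = fun z => (-1) *: vV' z + v z by apply/funext => z; rewrite scaleN1r addrC.
  by apply: inSpan_lin; [apply: inSpan_cons | apply: inSpan_nth0].
have [ww|ww] := eqVneq (ip w w) 0.
  exists fV'; split => //; split; first exact: inSpan_cons.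
  move=> v0 [<-|iv0]; last exact: ofV'.
  rewrite vE ipLr // -/r.
  rewrite (span_orth hr Hvs' ofV' svV') addr0.
  have := CS hr hw; rewrite ww mulr0 => h.
  have : ip r w ^+ 2 == 0 by rewrite eq_le h sqr_ge0.
  by rewrite sqrf_eq0 => /eqP ->; rewrite mulr0.
pose al := ip r w / ip w w.
exists (fun z => al *: w z + fV' z); split; first exact: HL.
split; first by apply: inSpan_lin => //; apply: inSpan_cons.
have -> : (fun z => f z - (al *: w z + fV' z)) = (fun z => (- al) *: w z + r z).
  by apply/funext => z; rewrite /r scaleNr opprD addrCA.
have hres : H (fun z => (- al) *: w z + r z) by apply: HL.
have o' : forall v0, List.In v0 vs -> ip (fun z => (- al) *: w z + r z) v0 = 0.
  move=> v0 iv0; have e1 : ip w v0 = 0 := ovV' v0 iv0.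
  have e2 : ip r v0 = 0 := ofV' v0 iv0.
  by rewrite (ipL (- al) hw hr (Hvs' _ iv0)) e1 e2 mulr0 addr0.
move=> v0 [<-|iv0]; last exact: o'.
rewrite vE ipLr // (span_orth hres Hvs' o' svV') addr0 ipL //.
by rewrite /al; field.
Qed.

End IP.

Lemma near0'_delta (P : R -> Prop) :
  (exists2 d, 0 < d & forall t, `|t| < d -> t != 0 -> P t) -> \forall t \near (0:R)^', P t.
Proof.
move=> [d d0 Hd]; rewrite /within; apply/nbhs_ballP; exists d => // t /= hb tn0.
by apply: Hd => //; move: hb; rewrite /ball /= sub0r normrN.
Qed.

Lemma emx_col n (M : 'M[R]_n) (b c : 'I_n) : (M *m (delta_mx c 0 : 'cV[R]_n)) b 0 = M b c.
Proof. by rewrite -colE mxE. Qed.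
Lemma emx_row n (v : 'cV[R]_n) (b : 'I_n) : ((delta_mx b 0 : 'cV[R]_n)^T *m v) 0 0 = v b 0.
Proof. by rewrite trmx_delta -rowE mxE. Qed.

Section Deriv.
Variables (n : nat) (X : set 'rV[R]_n) (K : 'rV[R]_n -> 'rV[R]_n -> 'M[R]_n).
Variables (H : set (vfun R n)) (ip : vfun R n -> vfun R n -> R).
Hypothesis oX : open X.
Hypothesis KC2 : kernel_C2 X K.
Hypothesis RK : is_rkhs X K H ip.

Lemma comp_repro g z b : H g -> X z -> g z b 0 = ip g (Ksec K z (delta_mx b 0)).
Proof. by move=> hg Xz; rewrite -(repro RK) // emx_row. Qed.

Lemma ipKK u v b c : X u -> X v ->
  ip (Ksec K u (delta_mx c 0)) (Ksec K v (delta_mx b 0)) = K v u b c.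
Proof. move=> Xu Xv; rewrite -comp_repro //; [exact: emx_col | exact: (HK RK)]. Qed.

Lemma ipKK' u v b c : X u -> X v ->
  ip (Ksec K v (delta_mx b 0)) (Ksec K u (delta_mx c 0)) = K v u b c.
Proof. by move=> Xu Xv; rewrite (ipC RK (HK RK _ Xv) (HK RK _ Xu)); exact: ipKK. Qed.

Variables (p a : 'I_n) (x : 'rV[R]_n).
Hypothesis Xx : X x.

Definition ea : 'cV[R]_n := delta_mx a 0.
Definition Dq (t : R) : vfun R n :=
  fun z => t^-1 *: (Ksec K (t *: ebasis R p + x) ea z - Ksec K x ea z).

Lemma XlineP : exists2 d, 0 < d & forall u, `|u| < d -> X (u *: ebasis R p + x).
Proof. exact: Xline oX x p Xx. Qed.

Definition dX := projT1 (cid2 XlineP).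
Lemma dX_gt0 : 0 < dX. Proof. by rewrite /dX; case: (cid2 XlineP). Qed.
Lemma dX_X u : `|u| < dX -> X (u *: ebasis R p + x).
Proof. by rewrite /dX; case: (cid2 XlineP) => d /= _; apply. Qed.

Lemma HDq t : `|t| < dX -> H (Dq t).
Proof.
move=> td; apply: (HZ RK); apply: (HB RK); apply: (HK RK) => //; exact: dX_X.
Qed.

Lemma ipDq_l t w : `|t| < dX -> H w ->
  ip (Dq t) w = t^-1 * (ip w (Ksec K (t *: ebasis R p + x) ea) - ip w (Ksec K x ea)).
Proof.
move=> td hw.
have h1 : H (Ksec K (t *: ebasis R p + x) ea) by apply: (HK RK); exact: dX_X.
have h2 : H (Ksec K x ea) by apply: (HK RK).
rewrite /Dq (@ipZl _ _ _ _ _ RK t^-1 (fun z => Ksec K (t *: ebasis R p + x) ea z - Ksec K x ea z) w) //;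
  last exact: (HB RK).
by rewrite (ipBl RK) // (ipC RK h1) // (ipC RK h2).
Qed.

Lemma ipDq s t : `|s| < dX -> `|t| < dX ->
  ip (Dq s) (Dq t) = (t * s)^-1 * (Gk n K a (t *: ebasis R p + x, s *: ebasis R p + x)
     - Gk n K a (x, s *: ebasis R p + x) - Gk n K a (t *: ebasis R p + x, x) + Gk n K a (x, x)).
Proof.
move=> sd td.
have Xs := dX_X sd; have Xt := dX_X td.
have hs' : H (Ksec K (s *: ebasis R p + x) ea) by apply: (HK RK).
have hx : H (Ksec K x ea) by apply: (HK RK).
rewrite (ipDq_l sd (HDq td)) (ipDq_l td hs') (ipDq_l td hx).
rewrite /ea !ipKK // /Gk /=.
rewrite invfM; ring.
Qed.
Definition Qf s t := (t * s)^-1 * (Gk n K a (t *: ebasis R p + x, s *: ebasis R p + x)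
     - Gk n K a (x, s *: ebasis R p + x) - Gk n K a (t *: ebasis R p + x, x) + Gk n K a (x, x)).
Definition Lk := 'D_(pdir2 R (rshift n p)) ('D_(pdir2 R (lshift n p)) (Gk n K a)) (x, x).

Lemma Dq_cauchy eps : 0 < eps -> exists2 d, 0 < d /\ d <= dX & forall s t, `|s| < d -> `|t| < d ->
  s != 0 -> t != 0 -> nd ip (Dq s) (Dq t) < eps.
Proof.
move=> e0; have e4 : 0 < eps / 4 by rewrite divr_gt0.
have [d1 d10 Hd1] := @Qlim n X K oX KC2 a p x Xx (eps / 4) e4.
exists (Num.min d1 dX); first by rewrite lt_min d10 dX_gt0 ge_min lexx orbT.
move=> s t; rewrite !lt_min => /andP[s1 sX] /andP[t1 tX] s0 t0.
have hs := HDq sX; have ht := HDq tX.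
have E : nd ip (Dq s) (Dq t) = ip (Dq s) (Dq s) - ip (Dq s) (Dq t) - (ip (Dq t) (Dq s) - ip (Dq t) (Dq t)).
  have hst := HB RK hs ht.
  by rewrite /nd (ipBl RK hs ht hst) (ipBr RK hs ht hs) (ipBr RK hs ht ht).
rewrite E !ipDq // -/(Qf s s) -/(Qf s t) -/(Qf t s) -/(Qf t t).
have q1 : `|Qf s s - Lk| < eps / 4 := Hd1 s s s1 s1 s0 s0.
have q2 : `|Qf s t - Lk| < eps / 4 := Hd1 t s t1 s1 t0 s0.
have q3 : `|Qf t s - Lk| < eps / 4 := Hd1 s t s1 t1 s0 t0.
have q4 : `|Qf t t - Lk| < eps / 4 := Hd1 t t t1 t1 t0 t0.
move: q1 q2 q3 q4; rewrite !ltr_norml => /andP[? ?] /andP[? ?] /andP[? ?] /andP[? ?].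
lra.
Qed.
Definition tk (k : nat) : R := dX / 2 / (k.+1)%:R.
Lemma tk_gt0 k : 0 < tk k.
Proof. by rewrite /tk !divr_gt0 ?dX_gt0 // ltr0n. Qed.
Lemma tk_ne0 k : tk k != 0. Proof. by rewrite gt_eqF ?tk_gt0. Qed.
Lemma tk_lt_dX k : `|tk k| < dX.
Proof.
rewrite gtr0_norm ?tk_gt0 // /tk ltr_pdivrMr ?ltr0n //.
have d0 := dX_gt0; have : 1 <= (k.+1)%:R :> R by rewrite ler1n.
nra.
Qed.
Lemma tk_small d : 0 < d -> exists N, forall i, (N <= i)%N -> `|tk i| < d.
Proof.
move=> d0; exists (Num.trunc (dX / 2 / d)) => i hi.
rewrite gtr0_norm ?tk_gt0 // /tk ltr_pdivrMr ?ltr0n //.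
have h1 := truncnS_gt (dX / 2 / d).
have h2 : ((Num.trunc (dX / 2 / d)).+1%:R : R) <= (i.+1)%:R by rewrite ler_nat.
have h3 : dX / 2 / d < (i.+1)%:R by exact: lt_le_trans h1 h2.
by move: h3; rewrite ltr_pdivrMr // [d * _]mulrC.
Qed.

Lemma h_exists : exists h, H h /\ forall eps, 0 < eps -> exists2 d, 0 < d &
  forall t, `|t| < d -> t != 0 -> nd ip (Dq t) h < eps.
Proof.
have hu k : H (Dq (tk k)) := HDq (tk_lt_dX k).
have cauchy : forall e : R, 0 < e -> exists N, forall i j, (N <= i)%N -> (N <= j)%N ->
    ip (fun z => Dq (tk i) z - Dq (tk j) z) (fun z => Dq (tk i) z - Dq (tk j) z) < e.
  move=> e e0; have [d [d0 _] Hd] := Dq_cauchy e0.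
  have [N HN] := tk_small d0.
  by exists N => i j hi hj; apply: Hd; rewrite ?HN ?tk_ne0.
have [h [hh hconv]] := Hcomplete RK hu cauchy.
exists h; split => // eps e0.
have e4 : 0 < eps / 4 by rewrite divr_gt0.
have [d1 [d10 d1X] Hd1] := Dq_cauchy e4.
have [N1 HN1] := hconv _ e4.
have [N2 HN2] := tk_small d10.
exists d1 => // t td t0.
have tX : `|t| < dX by exact: lt_le_trans td d1X.
have := nd_tri RK (HDq tX) (hu (maxn N1 N2)) hh.
have a1 := Hd1 t (tk (maxn N1 N2)) td (HN2 _ (leq_maxr _ _)) t0 (tk_ne0 _).
have a2 : nd ip (Dq (tk (maxn N1 N2))) h < eps / 4 := HN1 _ (leq_maxl _ _).
lra.
Qed.

Definition hD := projT1 (cid h_exists).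
Lemma hD_H : H hD. Proof. by rewrite /hD; case: (cid h_exists) => h [] /=. Qed.
Lemma hD_conv eps : 0 < eps -> exists2 d, 0 < d &
  forall t, `|t| < d -> t != 0 -> nd ip (Dq t) hD < eps.
Proof. by rewrite /hD; case: (cid h_exists) => h [] /= _; apply. Qed.

Lemma Dq_weak w : H w -> (fun t => ip (Dq t) w) @ (0:R)^' --> ip hD w.
Proof.
move=> hw; apply/cvgrPdist_lt => eps e0; apply: near0'_delta.
have ww0 := ip_ge0 RK hw.
have pe : 0 < eps ^+ 2 / (ip w w + 1) by rewrite divr_gt0 ?exprn_gt0 //; lra.
have [d d0 Hd] := hD_conv pe.
exists (Num.min d dX); first by rewrite lt_min d0 dX_gt0.
move=> t; rewrite lt_min => /andP[td tX] t0.
have ht := HDq tX.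
rewrite distrC -(ipBl RK ht hD_H hw) (ipC RK (HB RK ht hD_H) hw).
by apply: (CS_small RK hw (HB RK ht hD_H) e0); apply: Hd.
Qed.

Lemma deriv_val g : H g -> 'D_(ebasis R p) (fun z => g z a 0) x = ip g hD.
Proof.
move=> hg; rewrite (ipC RK hg hD_H); apply: cvg_lim => //.
apply: cvg_trans (Dq_weak hg); apply: near_eq_cvg.
apply: near0'_delta; exists dX; first exact: dX_gt0.
move=> t tX t0 /=.
rewrite (ipDq_l tX hg) /ea -!comp_repro //; exact: dX_X.
Qed.

Lemma h_val z : X z -> hD z = dKsec K p x ea z.
Proof.
move=> Xz; apply/matrixP => b j; rewrite (ord1 j) /dKsec /ea emx_col mxE.
rewrite (comp_repro b hD_H Xz); apply/esym; apply: cvg_lim => //.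
have hk : H (Ksec K z (delta_mx b 0)) by apply: (HK RK).
apply: cvg_trans (Dq_weak hk); apply: near_eq_cvg.
apply: near0'_delta; exists dX; first exact: dX_gt0.
move=> t tX t0 /=.
have Xt := dX_X tX.
by rewrite (ipDq_l tX hk) /ea !ipKK'.
Qed.
End Deriv.

Lemma In_seq (T : eqType) (q : T) (s : seq T) : q \in s -> List.In q s.
Proof.
elim: s => [|y s IH] //; rewrite in_cons => /orP[/eqP ->|hq]; [by left | by right; apply: IH].
Qed.
Lemma In_enum (T : finType) (q : T) : List.In q (enum T).
Proof. by apply: In_seq; rewrite mem_enum. Qed.

Section Repr.
Variables (n Nc : nat) (X : set 'rV[R]_n) (K : 'rV[R]_n -> 'rV[R]_n -> 'M[R]_n).
Variables (H : set (vfun R n)) (ip : vfun R n -> vfun R n -> R).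
Hypothesis oX : open X.
Hypothesis KC2 : kernel_C2 X K.
Hypothesis RK : is_rkhs X K H ip.
Variables (xc : 'I_Nc -> 'rV[R]_n).
Hypothesis Xxc : forall i, X (xc i).

Definition hfam (q : 'I_Nc * 'I_n * 'I_n) : vfun R n := hD oX KC2 RK q.1.2 q.2 (Xxc q.1.1).
Definition kfam (q : 'I_Nc * 'I_n) : vfun R n := Ksec K (xc q.1) (delta_mx q.2 0).
Definition fam : seq (vfun R n) :=
  map kfam (enum {: 'I_Nc * 'I_n}) ++ map hfam (enum {: 'I_Nc * 'I_n * 'I_n}).

Lemma fam_In v : List.In v fam -> (exists q, v = kfam q) \/ (exists q, v = hfam q).
Proof.
rewrite /fam List.in_app_iff !List.in_map_iff.
by case=> -[q [<- _]]; [left | right]; exists q.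
Qed.
Lemma kfam_In q : List.In (kfam q) fam.
Proof. by rewrite /fam List.in_app_iff; left; apply: List.in_map; apply: In_enum. Qed.
Lemma hfam_In q : List.In (hfam q) fam.
Proof. by rewrite /fam List.in_app_iff; right; apply: List.in_map; apply: In_enum. Qed.

Lemma fam_H v : List.In v fam -> H v.
Proof.
by case/fam_In => -[q ->]; [apply: (HK RK) | apply: hD_H].
Qed.

Lemma inV0 : in_V X K xc (fun _ => 0).
Proof.
exists (fun _ => 0), (fun _ _ => 0) => z _.
rewrite /Ksec /dKsec big1 ?add0r; last by move=> i _; rewrite mulmx0.
by rewrite big1 // => i _; rewrite big1 // => p' _; rewrite mulmx0.
Qed.

Lemma inVL c g1 g2 : in_V X K xc g1 -> in_V X K xc g2 -> in_V X K xc (fun z => c *: g1 z + g2 z).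
Proof.
move=> [A1 [A1' E1]] [A2 [A2' E2]].
exists (fun i => c *: A1 i + A2 i), (fun i p => c *: A1' i p + A2' i p) => z Xz.
rewrite E1 // E2 // /Ksec /dKsec.
have -> : \sum_(i < Nc) K z (xc i) *m (c *: A1 i + A2 i)
   = c *: \sum_(i < Nc) K z (xc i) *m A1 i + \sum_(i < Nc) K z (xc i) *m A2 i.
  by rewrite scaler_sumr -big_split; apply: eq_bigr => i _; rewrite mulmxDr scalemxAr.
set M := fun (i : 'I_Nc) (p : 'I_n) => \matrix_(a0 < n, b0 < n) 'D_(ebasis R p) (fun s => K z s a0 b0) (xc i).
have -> : \sum_(i < Nc) \sum_(p < n) M i p *m (c *: A1' i p + A2' i p)
   = c *: \sum_(i < Nc) \sum_(p < n) M i p *m A1' i p + \sum_(i < Nc) \sum_(p < n) M i p *m A2' i p.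
  rewrite scaler_sumr -big_split; apply: eq_bigr => i _.
  by rewrite scaler_sumr -big_split; apply: eq_bigr => p _; rewrite mulmxDr scalemxAr.
by rewrite scalerDr addrACA.
Qed.

Lemma kfam_V q : in_V X K xc (kfam q).
Proof.
case: q => i0 b.
exists (fun i => if i == i0 then delta_mx b 0 else 0), (fun _ _ => 0) => z _.
rewrite /kfam /Ksec /dKsec /= [X in _ = X + _](bigD1 i0) //= eqxx big1 ?addr0.
  by rewrite big1 ?addr0 // => i _; rewrite big1 // => p' _; rewrite mulmx0.
by move=> i /negbTE ->; rewrite mulmx0.
Qed.

Lemma hfam_V q : in_V X K xc (hfam q).
Proof.
case: q => [[i0 p0] a0].
exists (fun _ => 0), (fun i p => if (i == i0) && (p == p0) then delta_mx a0 0 else 0) => z Xz.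
rewrite /hfam /= (h_val _ _ _ _ _ _ Xz) /Ksec big1 ?add0r; last by move=> i _; rewrite mulmx0.
rewrite (bigD1 i0) //= (bigD1 p0) //= !eqxx /= big1 ?addr0.
  rewrite big1 ?addr0 // => i /negbTE ->; rewrite big1 // => p _; by rewrite /dKsec mulmx0.
by move=> p /negbTE ->; rewrite /= /dKsec mulmx0.
Qed.


Lemma repr_gen f : H f -> exists fV, [/\ H fV, in_V X K xc fV,
  (forall i, fV (xc i) = f (xc i)), (forall i, jac fV (xc i) = jac f (xc i)) &
  (ip fV fV <= ip f f /\ (ip f f <= ip fV fV -> in_V X K xc f))].
Proof.
move=> hf.
have [fV [hfV [sfV ofV]]] := proj RK fam_H hf.
pose r := fun z => f z - fV z.
have hr : H r := HB RK hf hfV.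
have orK i b : ip r (Ksec K (xc i) (delta_mx b 0)) = 0 := ofV _ (kfam_In (i, b)).
have orH q : ip r (hfam q) = 0 := ofV _ (hfam_In q).
have VfV : in_V X K xc fV.
  apply: (inSpan_S inV0 (fun c g1 g2 => @inVL c g1 g2) _ sfV).
  by move=> v; case/fam_In => -[q ->]; [apply: kfam_V | apply: hfam_V].
have Ev i : fV (xc i) = f (xc i).
  apply/matrixP => b j; rewrite (ord1 j).
  have := orK i b; rewrite -(comp_repro RK b hr (Xxc i)) /r !mxE.
  by move/eqP; rewrite subr_eq0 => /eqP ->.
have Ej i : jac fV (xc i) = jac f (xc i).
  apply/matrixP => b p; rewrite !mxE.
  rewrite (deriv_val oX KC2 RK p b (Xxc i) hfV) (deriv_val oX KC2 RK p b (Xxc i) hf).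
  have := orH ((i, p), b).
  rewrite /hfam /= (ipBl RK hf hfV (hD_H oX KC2 RK p b (Xxc i))).
  by move/eqP; rewrite subr_eq0 => /eqP ->.
have orfV : ip r fV = 0 := span_orth RK hr fam_H ofV sfV.
have Ef : ip f f = ip fV fV + ip r r.
  have := ipquad RK 1 hr hfV.
  have -> : (fun z => 1 *: r z + fV z) = f by apply/funext => z; rewrite scale1r /r subrK.
  by rewrite orfV => ->; rewrite mulr0 addr0 expr1n mul1r addrC.
have rr0 := ip_ge0 RK hr.
exists fV; split => //; split; first lra.
move=> hle; have rr : ip r r = 0 by lra.
have r0 := ip_eq0 RK hr rr.
have [A [A' EA]] := VfV; exists A, A' => z Xz; rewrite -EA //.
by have := r0 z Xz; rewrite /r => /eqP; rewrite subr_eq0 => /eqP.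
Qed.

End Repr.
End A.
Unset Implicit Arguments. Set Strict Implicit.

Theorem theorem3 (R : realType) (n m : nat) (X : set 'rV[R]_n)
  (N : nat) (xs : 'I_N -> 'rV[R]_n) (us : 'I_N -> 'cV[R]_m) (xds : 'I_N -> 'cV[R]_n)
  (Nc : nat) (xc : 'I_Nc -> 'rV[R]_n)
  (Kf KB : 'rV[R]_n -> 'rV[R]_n -> 'M[R]_n)
  (Hf HB : set (vfun R n)) (ipf ipb : vfun R n -> vfun R n -> R)
  (lam muf mub : R) (W : 'rV[R]_n -> 'M[R]_n)
  (fs : vfun R n) (bs : 'I_m -> vfun R n) :
  open X -> connected X -> bounded_set X ->
  (1 <= m)%N -> (m < n)%N ->
  (forall i, X (xs i)) ->
  (forall i, X (xc i)) ->
  (forall i, exists k, xs i = xc k) ->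
  kernel_C2 X Kf -> pd_kernel X Kf -> is_rkhs X Kf Hf ipf ->
  kernel_C2 X KB -> pd_kernel X KB -> is_rkhs X KB HB ipb ->
  (forall g, HB g -> forall x, X x -> forall j : 'I_n, (j < n - m)%N -> g x j 0 = 0) ->
  0 < lam -> 0 < muf -> 0 < mub ->
  (forall x, X x -> (W x)^T = W x) ->
  (forall x, X x -> forall p q : 'I_n, differentiable (fun z => W z p q) x) ->
  (exists f, Hf f /\ forall i, loewner_le (Flam m lam f W (xc i)) 0) ->
  (* (fs, bs) is an optimizer *)
  Hf fs -> (forall j, HB (bs j)) ->
  (forall i, loewner_le (Flam m lam fs W (xc i)) 0) ->
  (forall (f : vfun R n) (b : 'I_m -> vfun R n), Hf f -> (forall j, HB (b j)) ->
     (forall i, loewner_le (Flam m lam f W (xc i)) 0) ->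
     Jd xs us xds muf mub ipf ipb fs bs <= Jd xs us xds muf mub ipf ipb f b) ->
  in_V X Kf xc fs /\ forall j, in_V X KB xc (bs j).
Proof.
move=> oX _ _ m1 mn Xxs Xxc hxs KfC2 _ RKf KBC2 _ RKB _ lam0 muf0 mub0 _ _ _ hfs hbs feas opt.
have Exs (g1 g2 : vfun R n) : (forall i, g1 (xc i) = g2 (xc i)) -> forall i, g1 (xs i) = g2 (xs i).
  by move=> E i; have [k ->] := hxs i.
have [fV [hfV VfV EfV EjV [le1 imp1]]] := repr_gen oX KfC2 RKf Xxc hfs.
have feasV i : loewner_le (Flam m lam fV W (xc i)) 0.
  by rewrite /Flam /dirW (EfV i) (EjV i); apply: feas.
have optf := opt fV bs hfV hbs feasV.
have D1 : \sum_(i < N) sqnorm (fV (xs i) + Bhat bs (xs i) *m us i - xds i)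
        = \sum_(i < N) sqnorm (fs (xs i) + Bhat bs (xs i) *m us i - xds i).
  by apply: eq_bigr => i _; rewrite (Exs _ _ EfV i).
move: optf; rewrite /Jd D1 => optf.
have : muf * ipf fs fs <= muf * ipf fV fV by lra.
rewrite ler_pM2l // => le2.
split; first exact: imp1.
have hb j : exists bV, [/\ HB bV, in_V X KB xc bV,
  (forall i, bV (xc i) = bs j (xc i)), (forall i, jac bV (xc i) = jac (bs j) (xc i)) &
  (ipb bV bV <= ipb (bs j) (bs j) /\ (ipb (bs j) (bs j) <= ipb bV bV -> in_V X KB xc (bs j)))].
  have Hx := repr_gen oX KBC2 RKB Xxc (hbs j). exact Hx.
have [bV HbV] := boolp.choice hb.
have hbV j : HB (bV j) by case: (HbV j).
have optb := opt fs bV hfs hbV feas.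
have EB i : Bhat bV (xs i) = Bhat bs (xs i).
  apply/matrixP => a j; rewrite !mxE.
  by case: (HbV j) => _ _ E _ _; rewrite (Exs _ _ E i).
have D2 : \sum_(i < N) sqnorm (fs (xs i) + Bhat bV (xs i) *m us i - xds i)
        = \sum_(i < N) sqnorm (fs (xs i) + Bhat bs (xs i) *m us i - xds i).
  by apply: eq_bigr => i _; rewrite EB.
move: optb; rewrite /Jd D2 => optb.
have : mub * \sum_(j < m) ipb (bs j) (bs j) <= mub * \sum_(j < m) ipb (bV j) (bV j) by lra.
rewrite ler_pM2l // => le3.
move=> j0.
case: (HbV j0) => _ _ _ _ [_ imp]; apply: imp.
have hsum : \sum_(j < m) (ipb (bs j) (bs j) - ipb (bV j) (bV j)) <= 0 by rewrite sumrB; lra.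
move: hsum; rewrite (bigD1 j0) //= => hsum.
have : 0 <= \sum_(j < m | j != j0) (ipb (bs j) (bs j) - ipb (bV j) (bV j)).
  by apply: sumr_ge0 => j _; rewrite subr_ge0; case: (HbV j) => _ _ _ _ [].
lra.
Qed.
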